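(* Let $G$ be a connected graph with minimum degree $\delta\geq 2$ such that for every edge $v_iv_j\in E(G)$ we have $|d_i-d_j|\leq (2k-1)^{2}$, where $k=\min\{d_i,d_j\}$. Then $GA(G)>ABC(G)$.
   Context: All graphs are finite, simple and undirected; $d_i$ denotes the degree of vertex $v_i$. The first geometric-arithmetic index is $GA(G)=\sum_{v_iv_j\in E(G)}\frac{2\sqrt{d_id_j}}{d_i+d_j}$ and the atom-bond connectivity index is $ABC(G)=\sum_{v_iv_j\in E(G)}\sqrt{\frac{d_i+d_j-2}{d_id_j}}$. *)

(* Defs.v *)
From mathcomp Require Import all_boot all_order all_algebra.
Set Implicit Arguments. Unset Strict Implicit. Unset Printing Implicit Defensive.
Import Order.TTheory GRing.Theory Num.Theory.

Definition deg (n : nat) (e : rel 'I_n) (x : 'I_n) : nat := #|[set y | e x y]|.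

Definition simple_graph (n : nat) (e : rel 'I_n) : Prop :=
  symmetric e /\ irreflexive e.

Definition connected_graph (n : nat) (e : rel 'I_n) : Prop :=
  (0 < n)%N /\ forall x y : 'I_n, connect e x y.

Definition min_degree_ge (n : nat) (e : rel 'I_n) (m : nat) : Prop :=
  forall x : 'I_n, (m <= deg e x)%N.

Local Open Scope ring_scope.

(* Each unordered edge {v_i, v_j} is counted once, as the pair i < j. *)
Definition GA (R : rcfType) (n : nat) (e : rel 'I_n) : R :=
  \sum_(i < n) \sum_(j < n | (i < j)%N && e i j)
     (2 * Num.sqrt ((deg e i)%:R * (deg e j)%:R) / ((deg e i)%:R + (deg e j)%:R)).

Definition ABC (R : rcfType) (n : nat) (e : rel 'I_n) : R :=
  \sum_(i < n) \sum_(j < n | (i < j)%N && e i j)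
     Num.sqrt (((deg e i)%:R + (deg e j)%:R - 2) / ((deg e i)%:R * (deg e j)%:R)).

(* Main.v *)
Require Import Defs.
From mathcomp Require Import all_boot all_order all_algebra ring lra.
Import Order.TTheory GRing.Theory Num.Theory.
Local Open Scope ring_scope.

Lemma keyR (R : rcfType) (x t : R) : 2 <= x -> 0 <= t -> t <= (2*x-1)^+2 ->
  (x+(x+t)-2)*(x+(x+t))^+2 < 4*(x*(x+t))^+2.
Proof.
move=> hx ht hu; rewrite -subr_gt0.
have -> : 4*(x*(x+t))^+2 - (x+(x+t)-2)*(x+(x+t))^+2 =
  4*x*x*(x*x-2*x+2) + (2*x+1)*t + t*t*((2*x-1)^+2 - t) + (2*x-1)*t*((2*x-1)^+2 - t) by ring.
have hu' : 0 <= (2*x-1)^+2 - t by rewrite subr_ge0.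
have hx0 : 0 < x by lra.
have h3 : 0 < x*x-2*x+2 by nra.
apply: ltr_wpDr; first by apply: mulr_ge0 => //; apply: mulr_ge0 => //; lra.
apply: ltr_wpDr; first by apply: mulr_ge0 => //; apply: mulr_ge0.
apply: ltr_wpDr; first by apply: mulr_ge0 => //; lra.
by apply: mulr_gt0 => //; apply: mulr_gt0 => //; apply: mulr_gt0.
Qed.

Lemma keyN (R : rcfType) (a b : nat) : (2<=a)%N -> (2<=b)%N ->
  (maxn a b - minn a b <= (2*minn a b -1)^2)%N ->
  (a%:R+b%:R-2)*(a%:R+b%:R)^+2 < 4*(a%:R*b%:R)^+2 :> R.
Proof.
wlog: a b / (a <= b)%N => [W|hab] ha hb.
  case/orP: (leq_total a b) => h; first exact: (W a b h).
  rewrite (addrC a%:R) (mulrC a%:R) maxnC minnC.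
  exact: (W b a h).
rewrite (maxn_idPr hab) (minn_idPl hab) => ht.
have -> : b%:R = a%:R + (b - a)%:R :> R by rewrite -natrD subnKC.
apply: keyR; first by rewrite (ler_nat R 2 a).
  by [].
have := ht; rewrite -(ler_nat R).
have h1 : (1 <= 2*a)%N by rewrite muln_gt0 (leq_trans _ ha).
rewrite natrX natrB // natrB // natrM.
by [].

Qed.

Lemma edgeR (R : rcfType) (x y : R) : 0 < x -> 0 < y ->
  (x+y-2)*(x+y)^+2 < 4*(x*y)^+2 ->
  Num.sqrt ((x+y-2)/(x*y)) < 2 * Num.sqrt (x*y) / (x+y).
Proof.
move=> hx hy H.
have hxy : 0 < x*y by apply: mulr_gt0.
have hs : 0 < x+y by apply: addr_gt0.
set g := 2 * Num.sqrt (x*y) / (x+y).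
have hg : 0 < g by rewrite /g divr_gt0 // mulr_gt0 // sqrtr_gt0.
rewrite -(ger0_norm (ltW hg)) -sqrtr_sqr ltr_sqrt ?exprn_gt0 //.
have -> : g^+2 = 4*(x*y)/(x+y)^+2.
  rewrite /g expr_div_n exprMn sqr_sqrtr ?ltW //; congr (_ * _ / _); ring.
rewrite ltr_pdivlMr ?exprn_gt0 // mulrAC ltr_pdivrMr //.
by have -> : 4*(x*y)*(x*y) = 4*(x*y)^+2 by ring.
Qed.

Lemma sum_lt (R : rcfType) n (P : 'I_n -> 'I_n -> bool) (F G : 'I_n -> 'I_n -> R) i0 j0 :
  (forall i j, P i j -> F i j < G i j) -> P i0 j0 ->
  \sum_(i < n) \sum_(j < n | P i j) F i j < \sum_(i < n) \sum_(j < n | P i j) G i j.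
Proof.
move=> H P0.
rewrite (bigD1 i0) //= [X in _ < X](bigD1 i0) //=.
apply: ltr_leD.
  rewrite (bigD1 j0) //= [X in _ < X](bigD1 j0) //=.
  apply: ltr_leD; first exact: H.
  by apply: ler_sum => j /andP[Pj _]; exact: ltW (H _ _ Pj).
by apply: ler_sum => i _; apply: ler_sum => j Pj; exact: ltW (H _ _ Pj).
Qed.

Theorem theorem3p6 (R : rcfType) (n : nat) (e : rel 'I_n) :
  simple_graph e ->
  connected_graph e ->
  min_degree_ge e 2 ->
  (forall i j : 'I_n, e i j ->
     let k := minn (deg e i) (deg e j) in
     (maxn (deg e i) (deg e j) - k <= (2 * k - 1) ^ 2)%N) ->
  (ABC R e < GA R e)%R.
Proof.
move=> [hsym hirr] [hn _] hm hE.
pose x := Ordinal hn.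
have : (0 < #|[set y | e x y]|)%N by apply: leq_trans (hm x).
case/card_gt0P => y; rewrite inE => exy.
have hxy : x != y by apply/eqP => exy'; move: exy; rewrite -exy' hirr.
have hpt : forall i j : 'I_n, (i < j)%N && e i j ->
  Num.sqrt (((deg e i)%:R + (deg e j)%:R - 2) / ((deg e i)%:R * (deg e j)%:R))
  < 2 * Num.sqrt ((deg e i)%:R * (deg e j)%:R) / ((deg e i)%:R + (deg e j)%:R) :> R.
  move=> i j /andP[_ eij].
  have hi := hm i; have hj := hm j.
  apply: edgeR; first by rewrite ltr0n (leq_trans _ hi).
    by rewrite ltr0n (leq_trans _ hj).
  exact: keyN (hE _ _ eij).
rewrite /ABC /GA.
have eyx : e y x by rewrite hsym.
move: hxy; rewrite -val_eqE neq_ltn => /orP[h|h].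
  by apply: (@sum_lt R n _ _ _ x y hpt); rewrite exy andbT.
by apply: (@sum_lt R n _ _ _ y x hpt); rewrite eyx andbT.
Qed.
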